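(* Consider MALIQUANT. Then, $\mathcal{SG}(0)=0$ and, for all $n\in \mathbb{N}$, $\mathcal{SG}(n)=i_o(n)$.
   Context: MALIQUANT is the impartial normal-play game on the nonnegative integers where from $n$ a player moves to a nondivisor of $n$ smaller than $n$: $\mathrm{opt}(n)=\{d: 0\le d<n,\ d\nmid n\}$ (in particular $0$ is an option of every $n>0$, and $0$ has no options). $\mathcal{SG}$ denotes the Sprague-Grundy value (mex rule). $i_o:\mathbb{N}\to\mathbb{N}$ is the index of the largest odd factor: if $n=2^k(2m-1)$ then $i_o(n)=m$. *)

(* Defs.v *)
From mathcomp Require Import all_boot.
Set Implicit Arguments. Unset Strict Implicit. Unset Printing Implicit Defensive.

(* Options of n in MALIQUANT: the nondivisors d of n with 0 <= d < n.
   (In MathComp, 0 %| n iff n = 0, so 0 is an option of every n > 0.) *)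
Definition opt (n : nat) : seq nat := [seq d <- iota 0 n | ~~ (d %| n)].

(* Minimum excludant: the least natural number not in s.
   Some m <= size s is always missing from s, so searching iota 0 (size s).+1 suffices. *)
Definition mex (s : seq nat) : nat :=
  find (fun m => m \notin s) (iota 0 (size s).+1).

(* Sprague-Grundy value, by recursion on the position with a fuel argument;
   fuel n.+1 suffices since all options of n are < n. *)
Fixpoint sg_fuel (k n : nat) : nat :=
  match k with
  | 0 => 0
  | k'.+1 => mex [seq sg_fuel k' d | d <- opt n]
  end.

Definition SG (n : nat) : nat := sg_fuel n.+1 n.

(* Index of the largest odd factor: if n = 2^k (2m-1) then i_o n = m. *)
Definition oddpart (n : nat) : nat := n %/ 2 ^ logn 2 n.
Definition i_o (n : nat) : nat := (oddpart n).+1./2.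

(* Main.v *)
Require Import Defs.
From mathcomp Require Import all_boot zify.

Lemma sg_fuel_eq k1 k2 n : n < k1 -> n < k2 -> sg_fuel k1 n = sg_fuel k2 n.
Proof.
elim: k1 k2 n => [|k1 IH] [|k2] n //= h1 h2.
congr mex; apply/eq_in_map => d; rewrite mem_filter mem_iota /= => /andP[_ hd].
apply: IH; lia.
Qed.

Lemma SG_rec n : SG n = mex [seq SG d | d <- opt n].
Proof.
rewrite {1}/SG /=; congr mex; apply/eq_in_map => d.
rewrite mem_filter mem_iota /= => /andP[_ hd].
rewrite /SG; apply: sg_fuel_eq; lia.
Qed.

Lemma mex_eq s m : (forall v, v < m -> v \in s) -> m \notin s -> mex s = m.
Proof.
move=> hlt hm.
have msz : m <= size s.
  have := @uniq_leq_size _ (iota 0 m) s (iota_uniq 0 m).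
  rewrite size_iota; apply => x; rewrite mem_iota => /andP[_ hx]; apply: hlt; lia.
rewrite /mex; set p := (fun m0 => m0 \notin s).
have hh : has p (iota 0 (size s).+1).
  by apply/hasP; exists m => //; rewrite mem_iota; lia.
have := nth_find 0 hh; have := @before_find _ 0 p (iota 0 (size s).+1).
have := hh; rewrite has_find size_iota => hi.
rewrite nth_iota // add0n => hb hn.
have : ~~ (find p (iota 0 (size s).+1) < m).
  by apply/negP => /hlt; rewrite /p in hn; move: hn => /negP.
case: (ltngtP (find p (iota 0 (size s).+1)) m) => //.
move=> hlt2 _; have := hb m hlt2; rewrite nth_iota; last lia.
by rewrite add0n /p hm.
Qed.

Lemma i_o_eq {k o} : odd o -> i_o (2 ^ k * o) = o.+1./2.
Proof.
move=> ho; have o0 : 0 < o by case: o ho.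
rewrite /i_o /oddpart lognM ?expn_gt0 // pfactorK // logn_coprime ?coprime2n //.
by rewrite addn0 mulKn // expn_gt0.
Qed.

Lemma decomp n : 0 < n -> exists k o, odd o /\ n = 2 ^ k * o.
Proof.
move=> n0; case: (pfactor_coprime (isT : prime 2) n0) => o; rewrite coprime2n => ho hn.
by exists (logn 2 n), o; rewrite mulnC.
Qed.

Set Implicit Arguments.
Lemma odd_half {o} : odd o -> o = (o.+1./2).*2.-1.
Proof. move=> ho; have := odd_double_half o.+1; rewrite /= ho /=; lia. Qed.

Lemma SG0 : SG 0 = 0.
Proof. by []. Qed.

Lemma in_opt d n : (d \in opt n) = (d < n) && ~~ (d %| n).
Proof. by rewrite mem_filter mem_iota andbC. Qed.

Theorem mainTheorem4 : SG 0 = 0 /\ forall n : nat, 0 < n -> SG n = i_o n.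
Proof.
split; first exact: SG0.
suff H : forall N n, 0 < n -> n < N -> SG n = i_o n by move=> n n0; apply: (H n.+1).
elim=> [|N IH] n n0 nN; first by [].
have {}IH : forall d, 0 < d -> d < n -> SG d = i_o d.
  by move=> d d0 dn; apply: IH => //; lia.
have [k [o [ho hn]]] := decomp _ n0.
rewrite hn.
have K0 : 0 < 2 ^ k by rewrite expn_gt0.
have o0 : 0 < o by move: ho; case: (o).
rewrite i_o_eq // SG_rec.
have ho2 := odd_half ho.
set m := o.+1./2 in ho2 *.
apply: mex_eq.
- move=> v vm; apply/mapP.
  case: v vm => [|v] vm.
    by exists 0; rewrite ?SG0 // in_opt dvd0n; lia.
  set w := v.*2.+1.
  have hw : odd w by rewrite /w /= odd_double.
  have wo : w < o by rewrite /w; lia.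
  have wv : w.+1./2 = v.+1.
    by rewrite /w -[v.*2.+2]/((v.+1).*2) doubleK.
  case hd: (w %| 2 ^ k * o).
  + have : w %| o.
      have cw : coprime w (2 ^ k) by rewrite coprime_sym coprimeXl // coprime2n.
      by rewrite -(Gauss_dvdr o cw).
    case/dvdnP=> c oc.
    have c3 : 3 <= c.
      case: c oc => [|[|[|c]]] oc //; [lia | lia |].
      by move: ho; rewrite oc mul2n odd_double.
    have dn : 2 ^ k.+1 * w < 2 ^ k * o.
      rewrite expnS oc; nia.
    exists (2 ^ k.+1 * w).
      rewrite in_opt dn /=; apply/negP => hdv.
      have : 2 %| o.
        move: hdv; rewrite expnS (mulnC 2 (2 ^ k)) -mulnA dvdn_pmul2l // => h.
        exact: dvdn_trans (dvdn_mulr w (dvdnn 2)) h.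
      by rewrite dvdn2 ho.
    have K1 : 0 < 2 ^ k.+1 by rewrite expn_gt0.
    rewrite IH ?i_o_eq ?wv ?hn //; nia.
  + have dn : w < 2 ^ k * o by apply: leq_trans wo (leq_pmull _ K0).
    exists (2 ^ 0 * w); first by rewrite mul1n in_opt dn hd.
    by rewrite IH ?i_o_eq ?wv ?hn // mul1n.
- apply/mapP => [[d]]; rewrite in_opt => /andP[dn ndv].
  case: d dn ndv => [|d] dn ndv.
    by rewrite SG0 => m0; move: ho2 ho; rewrite m0 => ->.
  have [j [o' [ho' hd]]] := decomp _ (ltn0Sn d).
  rewrite IH ?hn // hd i_o_eq // => mo.
  have oo : o' = o by rewrite (odd_half ho') ho2 mo.
  move: dn ndv; rewrite hd oo ltn_pmul2r // ltn_exp2l // => jk.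
  by rewrite dvdn_mul ?dvdnn ?dvdn_exp2l // ltnW.
Qed.
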